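(* Fix $n\in\mathbb N$ and suppose there is an algorithm for $n$ values in the discrete-time model that is $\alpha$-consistent and $\beta$-robust for the MaxProb objective. Then for every $K\in\mathbb N$ and every predicted prior $\tilde F$ supported on $[K]$ with $\tilde f(1)>0$, there exist real numbers $\{y_{t,\ell}\}_{t\in\{0,1,\dots,n\},\,\ell\in[K]}$ satisfying: (i) $y_{0,\ell}=1$ for all $\ell\in[K]$; (ii) $0\le y_{t,\ell}\le1$ for all $t\in[n],\ell\in[K]$; (iii) for all $t\in[n],\ell\in[K]$: $\Delta^t(\ell)\,y_{t,\ell}-\Delta^{t-1}(\ell)\tilde F(\ell-1)\,y_{t-1,\ell}\ge0$; (iv) for all $t\in[n],\ell\in[K]$: $\Delta^t(\ell)\,y_{t,\ell}-\Delta^{t-1}(\ell)\tilde F(\ell-1)\,y_{t-1,\ell}\le\sum_{m\in[\ell]}\Delta^{t-1}(m)\,\tilde f(\ell)\,y_{t-1,m}$; (v) $\displaystyle\sum_{t\in[n]}\sum_{\ell\in[K]}\tilde F(\ell)^{n-t}\Big(\sum_{m\in[\ell]}\Delta^{t-1}(m)\tilde f(\ell)y_{t-1,m}+\Delta^{t-1}(\ell)\tilde F(\ell-1)y_{t-1,\ell}-\Delta^t(\ell)y_{t,\ell}\Big)\ge\alpha$; (vi) for all $k\in[K]$: $\displaystyle\sum_{t\in[n]}\sum_{\ell\in[k]}\frac{\tilde F(\ell)^{n-t}}{\tilde F(k)^n}\Big(\sum_{m\in[\ell]}\Delta^{t-1}(m)\tilde f(\ell)y_{t-1,m}+\Delta^{t-1}(\ell)\tilde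 F(\ell-1)y_{t-1,\ell}-\Delta^t(\ell)y_{t,\ell}\Big)\ge\beta$.
   Context: Discrete-time model: $n$ values $x_1,\dots,x_n$ are drawn i.i.d. from an unknown prior $F$ (a distribution on $[0,\infty)$, possibly discrete) and revealed in the order $x_1,x_2,\dots,x_n$; upon seeing $x_t$ an online algorithm (knowing $n$, a predicted prior $\tilde F$, the values seen so far, and internal randomness) must irrevocably accept or reject it; at most one value is accepted. MaxProb with the all-ties-win convention: the algorithm succeeds if the accepted value equals $\max_i x_i$. The competitive ratio is the success probability; $\alpha$-consistent means $\alpha$-competitive for every $F$ when $\tilde F=F$; $\beta$-robust means $\beta$-competitive for every $F$ and every $\tilde F$. Here $[K]=\{1,\dots,K\}$, $\tilde F$ is a distribution on $[K]$ with cdf $\tilde F$ (with $\tilde F(0)=0$) and pmf $\tilde f$. For $t\in[n]$, $\Delta^t(\ell)=\tilde F(\ell)^t-\tilde F(\ell-1)^t$, and $\Delta^0(\ell)=1$ if $\ell=1$ and $0$ otherwise. *)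

(* Defs.v *)
From mathcomp Require Import all_boot all_order all_algebra.
From mathcomp Require Import reals.
Set Implicit Arguments. Unset Strict Implicit. Unset Printing Implicit Defensive.
Import Order.TTheory GRing.Theory Num.Theory.
Local Open Scope ring_scope.

(* A finitely supported distribution on [0, oo): a duplicate-free list of
   support points together with a mass function. *)
Record fdist (R : realType) := FDist { supp : seq R; mass : R -> R }.

Definition is_fdist (R : realType) (F : fdist R) : Prop :=
  [/\ uniq (supp F), all (fun x => 0 <= x) (supp F),
      (forall x, 0 <= mass F x),
      (forall x, x \notin supp F -> mass F x = 0)
    & \sum_(x <- supp F) mass F x = 1].

(* An online algorithm in behavioural form: given the predicted prior and the
   history x_1..x_t (the last entry being the current value), the probability
   of accepting x_t provided nothing has been accepted yet. n is fixed. *)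
Definition algorithm (R : realType) := fdist R -> seq R -> R.

Definition valid_alg (R : realType) (A : algorithm R) : Prop :=
  forall Ft h, 0 <= A Ft h <= 1.

Definition vals (R : realType) (n : nat) (F : fdist R)
  (xs : {ffun 'I_n -> 'I_(size (supp F))}) (i : 'I_n) : R :=
  nth 0 (supp F) (xs i).

Definition hist (R : realType) (n : nat) (F : fdist R)
  (xs : {ffun 'I_n -> 'I_(size (supp F))}) (t : nat) : seq R :=
  take t.+1 [seq vals xs i | i <- enum 'I_n].

(* MaxProb success probability (all ties win) of A with prediction Ft,
   when the n values are i.i.d. from F. *)
Definition success (R : realType) (n : nat) (A : algorithm R)
  (Ft F : fdist R) : R :=
  \sum_(xs : {ffun 'I_n -> 'I_(size (supp F))})
    (\prod_(i < n) mass F (vals xs i)) *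
    \sum_(t < n)
      (\prod_(s < n | (s < t)%N) (1 - A Ft (hist xs s))) *
      A Ft (hist xs t) *
      (if [forall j : 'I_n, vals xs j <= vals xs t] then 1 else 0).

Definition consistent (R : realType) (n : nat) (A : algorithm R) (alpha : R)
  : Prop := forall F, is_fdist F -> alpha <= success n A F F.

Definition robust (R : realType) (n : nat) (A : algorithm R) (beta : R)
  : Prop := forall F Ft, is_fdist F -> is_fdist Ft -> beta <= success n A Ft F.

Definition pmf (R : realType) (Ft : fdist R) (l : nat) : R := mass Ft l%:R.

Definition cdf (R : realType) (Ft : fdist R) (l : nat) : R :=
  \sum_(1 <= m < l.+1) pmf Ft m.

Definition Delta (R : realType) (Ft : fdist R) (t l : nat) : R :=
  if t == 0%N then (l == 1%N)%:R
  else cdf Ft l ^+ t - cdf Ft l.-1 ^+ t.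

Definition gain (R : realType) (Ft : fdist R) (y : nat -> nat -> R)
  (t l : nat) : R :=
  \sum_(1 <= m < l.+1) Delta Ft t.-1 m * pmf Ft l * y t.-1 m
  + Delta Ft t.-1 l * cdf Ft l.-1 * y t.-1 l - Delta Ft t l * y t l.

(* Main.v *)
Require Import Defs.
From mathcomp Require Import all_boot all_order all_algebra.
From mathcomp Require Import reals.
From mathcomp Require Import ring lra zify.
Import Order.TTheory GRing.Theory Num.Theory.
Local Open Scope ring_scope.
Set Implicit Arguments. Unset Strict Implicit. Unset Printing Implicit Defensive.



Section Lsum.
Variable R : realType.

Fixpoint lsum (T : Type) (L : seq T) (n : nat) (G : seq T -> R) : R :=
  if n is n'.+1 then \sum_(x <- L) lsum L n' (fun h => G (x :: h)) else G [::].

Lemma lsum_ext_sz T (L : seq T) n (G1 G2 : seq T -> R) :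
  (forall h, size h = n -> G1 h = G2 h) -> lsum L n G1 = lsum L n G2.
Proof.
elim: n G1 G2 => [|n IH] G1 G2 H /=; first by apply: H.
apply: eq_bigr => x _; apply: IH => h Hh; by apply: H; rewrite /= Hh.
Qed.

Lemma lsum_le_sz T (L : seq T) n (G1 G2 : seq T -> R) :
  (forall h, size h = n -> G1 h <= G2 h) -> lsum L n G1 <= lsum L n G2.
Proof.
elim: n G1 G2 => [|n IH] G1 G2 H /=; first by apply: H.
apply: ler_sum => x _; apply: IH => h Hh; by apply: H; rewrite /= Hh.
Qed.

Lemma lsum0 T (L : seq T) n : lsum L n (fun _ => 0) = 0.
Proof. by elim: n => //= n IH; rewrite big1. Qed.

Lemma lsum_ge0_sz T (L : seq T) n (G : seq T -> R) :
  (forall h, size h = n -> 0 <= G h) -> 0 <= lsum L n G.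
Proof. by move=> H; rewrite -(lsum0 L n); apply: lsum_le_sz. Qed.

Lemma lsumZ T (L : seq T) n c (G : seq T -> R) :
  lsum L n (fun h => c * G h) = c * lsum L n G.
Proof.
elim: n G => [|n IH] G //=; rewrite mulr_sumr; apply: eq_bigr => x _; exact: IH.
Qed.

Lemma lsum_sum T I (r : seq I) (L : seq T) n (F : I -> seq T -> R) :
  lsum L n (fun h => \sum_(i <- r) F i h) = \sum_(i <- r) lsum L n (F i).
Proof.
elim: n F => [|n IH] F //=.
rewrite exchange_big /=; apply: eq_bigr => x _; exact: IH.
Qed.

Lemma lsumD T (L : seq T) n (G1 G2 : seq T -> R) :
  lsum L n (fun h => G1 h + G2 h) = lsum L n G1 + lsum L n G2.
Proof.
elim: n G1 G2 => [|n IH] G1 G2 //=; rewrite -big_split; apply: eq_bigr => x _; exact: IH.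
Qed.

Lemma lsumN T (L : seq T) n (G : seq T -> R) :
  lsum L n (fun h => - G h) = - lsum L n G.
Proof. by rewrite -mulN1r -lsumZ; apply: lsum_ext_sz => h _; rewrite mulN1r. Qed.

Lemma lsumB T (L : seq T) n (G1 G2 : seq T -> R) :
  lsum L n (fun h => G1 h - G2 h) = lsum L n G1 - lsum L n G2.
Proof. by rewrite lsumD lsumN. Qed.

Lemma lsum_cat T (L : seq T) a b (G : seq T -> R) :
  lsum L (a + b) G = lsum L a (fun u => lsum L b (fun v => G (u ++ v))).
Proof.
elim: a G => [|a IH] G //=.
apply: eq_bigr => x _; exact: IH.
Qed.

Lemma lsum_map T1 T2 (f : T1 -> T2) (L : seq T1) n (G : seq T2 -> R) :
  lsum (map f L) n G = lsum L n (fun h => G (map f h)).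
Proof.
elim: n G => [|n IH] G //=; rewrite big_map; apply: eq_bigr => x _; exact: IH.
Qed.

Lemma lsum_ffun T m (f : 'I_m -> T) n (G : seq T -> R) :
  \sum_(xs : {ffun 'I_n -> 'I_m}) G (map (fun i => f (xs i)) (enum 'I_n))
  = lsum (map f (enum 'I_m)) n G.
Proof.
elim: n G => [|n IH] G /=.
  rewrite enum_ord0 /= sumr_const card_ffun !card_ord expn0 //.
rewrite big_map big_enum /=.
rewrite (eq_bigr (fun j => \sum_(ys : {ffun 'I_n -> 'I_m})
   G (f j :: map (fun i => f (ys i)) (enum 'I_n)))); last by move=> j _; rewrite -(IH (fun h => G (f j :: h))).
rewrite pair_big /=.
pose h (p : 'I_m * {ffun 'I_n -> 'I_m}) : {ffun 'I_n.+1 -> 'I_m} :=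
  [ffun i => if unlift ord0 i is Some j then p.2 j else p.1].
pose g (xs : {ffun 'I_n.+1 -> 'I_m}) := (xs ord0, [ffun j => xs (lift ord0 j)]).
have hK : cancel h g.
  case=> i ys; rewrite /g /h /= ffunE unlift_none; congr (_, _).
  by apply/ffunP => j; rewrite !ffunE liftK.
have gK : cancel g h.
  move=> xs; apply/ffunP => i; rewrite /g /h !ffunE /=.
  by case: unliftP => [j ->|->]; rewrite ?ffunE.
rewrite (reindex h); last by apply: onW_bij; exists g.
apply: eq_bigr => -[i ys] _ /=.
rewrite enum_ordSl /= -map_comp /h !ffunE unlift_none; congr (G (_ :: _)).
by apply: eq_map => j /=; rewrite ffunE liftK.
Qed.

End Lsum.



Section P2.
Variable R : realType.

Lemma sum_supp (T : eqType) (S U : seq T) (w g : T -> R) :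
  uniq S -> uniq U -> (forall x, w x != 0 -> (x \in S) && (x \in U)) ->
  \sum_(x <- S) w x * g x = \sum_(x <- U) w x * g x.
Proof.
move=> uS uU Hw.
have E : forall V, \sum_(x <- V) w x * g x = \sum_(x <- [seq x <- V | w x != 0]) w x * g x.
  move=> V; rewrite big_filter [RHS]big_mkcond /=; apply: eq_bigr => x _.
  by case: eqP => [->|]; rewrite ?mul0r.
rewrite E (E U); apply: perm_big; apply: uniq_perm; rewrite ?filter_uniq //.
move=> x; rewrite !mem_filter; case: (boolP (w x != 0)) => //= /Hw /andP[-> ->].
by [].
Qed.

Definition Wp (T : Type) (w : T -> R) (h : seq T) : R := \prod_(x <- h) w x.

Lemma lsum_supp (T : eqType) (S U : seq T) (w : T -> R) n (H : seq T -> R) :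
  uniq S -> uniq U -> (forall x, w x != 0 -> (x \in S) && (x \in U)) ->
  lsum S n (fun h => Wp w h * H h) = lsum U n (fun h => Wp w h * H h).
Proof.
move=> uS uU Hw; elim: n H => [|n IH] H //=.
have E : forall V x, lsum V n (fun h => Wp w (x :: h) * H (x :: h))
   = w x * lsum V n (fun h => Wp w h * H (x :: h)).
  move=> V x; rewrite -lsumZ; apply: lsum_ext_sz => h _.
  by rewrite /Wp big_cons mulrA.
under eq_bigr => x _ do rewrite E IH.
under [RHS]eq_bigr => x _ do rewrite E.
exact: sum_supp.
Qed.

Definition succG (n : nat) (A : algorithm R) (Ft F : fdist R) (h : seq R) : R :=
  Wp (mass F) h *
  \sum_(t < n)
      (\prod_(s < n | (s < t)%N) (1 - A Ft (take s.+1 h))) *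
      A Ft (take t.+1 h) *
      (if [forall j : 'I_n, nth 0 h j <= nth 0 h t] then 1 else 0).

Lemma success_lsum n A Ft F :
  success n A Ft F = lsum (supp F) n (succG n A Ft F).
Proof.
rewrite /success.
have E : supp F = map (fun j : 'I_(size (supp F)) => nth 0 (supp F) j)
                         (enum 'I_(size (supp F))).
  by rewrite (map_comp (nth 0 (supp F)) val) val_enum_ord -/(mkseq _ _) mkseq_nth.
rewrite [in RHS]E -lsum_ffun; apply: eq_bigr => xs _.
rewrite /succG /Wp big_map big_enum /=; congr (_ * _).
apply: eq_bigr => t _; congr (_ * _).
have Hn : forall j : 'I_n,
  nth 0 [seq nth 0 (supp F) (xs i) | i <- enum 'I_n] j = vals xs j.
  by move=> j; rewrite (nth_map j) ?size_enum_ord // nth_ord_enum.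
congr (if _ then _ else _); apply: eq_forallb => j; by rewrite !Hn.
Qed.

Definition Bmod (A : algorithm R) : algorithm R :=
  fun Ft h => if all (fun x => x <= last 0 h) h then A Ft h else 0.

Lemma Bmod_valid A : valid_alg A -> valid_alg (Bmod A).
Proof. by move=> HA Ft h; rewrite /Bmod; case: ifP => // _; rewrite lexx ler01. Qed.

Lemma success_mono n A Ft F : valid_alg A -> is_fdist F ->
  success n A Ft F <= success n (Bmod A) Ft F.
Proof.
move=> HA [_ _ Hm _ _]; rewrite !success_lsum; apply: lsum_le_sz => h Hh.
rewrite /succG; apply: ler_wpM2l; first by apply: prodr_ge0 => x _.
apply: ler_sum => t _.
case: ifP => Hall; last by rewrite !mulr0.
rewrite !mulr1.
have HB : Bmod A Ft (take t.+1 h) = A Ft (take t.+1 h).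
  rewrite /Bmod; case: ifP => // /negP []; apply/allP => x /mem_take Hx.
  have Hs : size (take t.+1 h) = t.+1 by rewrite size_takel // Hh ltn_ord.
  rewrite -nth_last Hs /= nth_take //.
  move/(nthP 0): Hx => [i Hi <-].
  have Hi' : (i < n)%N by rewrite -Hh.
  by move/forallP: Hall => /(_ (Ordinal Hi')).
rewrite HB; apply: ler_wpM2r; first by case/andP: (HA Ft (take t.+1 h)).
apply: ler_prod => s _; case/andP: (HA Ft (take s.+1 h)) => H0 H1.
rewrite subr_ge0 H1 /= /Bmod; case: ifP => _; first by [].
by rewrite subr0 lerBlDr lerDl.
Qed.

End P2.



Notation nsum K := (lsum (index_iota 1 K.+1)).

Section P3.
Variable R : realType.

Definition ind (b : bool) : R := (b : nat)%:R.
Definition Qa (a : seq nat -> R) (u : seq nat) : R :=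
  \prod_(0 <= s < size u) (1 - a (take s.+1 u)).
Definition cw (p : nat -> R) (l : nat) : R := \sum_(1 <= m < l.+1) p m.

Lemma ind_and b1 b2 : ind (b1 && b2) = ind b1 * ind b2.
Proof. by case: b1; case: b2; rewrite /ind /= ?mul1r ?mul0r. Qed.

Lemma ind01 b : 0 <= ind b <= 1.
Proof. by case: b; rewrite /ind /= lexx ler01. Qed.

Lemma cw_split (p : nat -> R) K l : (l <= K)%N ->
  \sum_(1 <= x < K.+1) p x * ind (x <= l)%N = cw p l.
Proof.
move=> lK; rewrite (big_cat_nat _ (n := l.+1)) //=.
have -> : \sum_(l.+1 <= i < K.+1) p i * ind (i <= l)%N = 0.
  rewrite big_nat_cond big1 // => i /andP[/andP[Hi _] _].
  by rewrite /ind leqNgt Hi /= mulr0.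
rewrite addr0 /cw; apply: eq_big_nat => i /andP[_ Hi].
by rewrite /ind -ltnS Hi mulr1.
Qed.

Lemma nsum_all_le (p : nat -> R) K l k : (l <= K)%N ->
  nsum K k (fun v => Wp p v * ind (all (fun x => x <= l)%N v)) = cw p l ^+ k.
Proof.
move=> lK; elim: k => [|k IH] /=; first by rewrite /Wp big_nil /ind /= mulr1.
rewrite exprS -{1}(cw_split p lK) mulr_suml; apply: eq_bigr => x _.
rewrite -IH -lsumZ; apply: lsum_ext_sz => v _.
rewrite /Wp big_cons ind_and; ring.
Qed.

Lemma take_cat_le (T : Type) n0 (s1 s2 : seq T) : (n0 <= size s1)%N ->
  take n0 (s1 ++ s2) = take n0 s1.
Proof.
move=> H; rewrite take_cat; case: ltnP => // H'.
have -> : n0 = size s1 by apply/eqP; rewrite eqn_leq H H'.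
by rewrite subnn take0 cats0 take_size.
Qed.

Lemma succ_aux (p : nat -> R) (a : seq nat -> R) K t m :
  nsum K (t + m.+1) (fun u => Wp p u *
     ((\prod_(0 <= s < t) (1 - a (take s.+1 u))) * a (take t.+1 u) *
      ind (all (fun x => x <= nth 0 u t)%N u)))
  = \sum_(1 <= l < K.+1) cw p l ^+ m * (p l *
      nsum K t (fun u => Wp p u * Qa a u * ind (all (fun x => x <= l)%N u) * a (rcons u l))).
Proof.
rewrite lsum_cat.
under [RHS]eq_bigr => l _ do rewrite mulrA -lsumZ.
rewrite -lsum_sum; apply: lsum_ext_sz => u Hu /=.
apply: eq_big_seq => x; rewrite mem_index_iota ltnS => /andP[_ xK].

rewrite -(nsum_all_le p m xK) -[RHS]mulrA [RHS]mulrC -lsumZ; apply: lsum_ext_sz => v _.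
have E1 : \prod_(0 <= s < t) (1 - a (take s.+1 (u ++ x :: v))) = Qa a u.
  rewrite /Qa Hu; apply: eq_big_nat => s /andP[_ Hs].
  by rewrite take_cat_le // Hu.
have E2 : take t.+1 (u ++ x :: v) = rcons u x.
  by rewrite take_cat Hu ltnNge leqnSn /= subSn // subnn /= take0 cats1.
have E3 : nth 0 (u ++ x :: v) t = x by rewrite nth_cat Hu ltnn subnn.
rewrite E1 E2 E3 all_cat /= leqnn /= ind_and /Wp big_cat big_cons /=; ring.
Qed.

Lemma succ_decomp (p : nat -> R) (a : seq nat -> R) K n :
  nsum K n (fun u => Wp p u * \sum_(t < n)
     (\prod_(s < n | (s < t)%N) (1 - a (take s.+1 u))) * a (take t.+1 u) *
      ind (all (fun x => x <= nth 0 u t)%N u))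
  = \sum_(1 <= t < n.+1) \sum_(1 <= l < K.+1) cw p l ^+ (n - t) * (p l *
      nsum K t.-1 (fun u => Wp p u * Qa a u * ind (all (fun x => x <= l)%N u) * a (rcons u l))).
Proof.
rewrite big_add1 /= big_mkord.
have E0 : forall u, Wp p u * \sum_(t < n)
     (\prod_(s < n | (s < t)%N) (1 - a (take s.+1 u))) * a (take t.+1 u) *
      ind (all (fun x => x <= nth 0 u t)%N u)
   = \sum_(t < n) Wp p u * ((\prod_(0 <= s < t) (1 - a (take s.+1 u))) * a (take t.+1 u) *
      ind (all (fun x => x <= nth 0 u t)%N u)).
  move=> u; rewrite mulr_sumr; apply: eq_bigr => t _.
  rewrite (big_nat_widen 0 t n) ?(ltnW (ltn_ord t)) // big_mkord.
  by rewrite mulrA.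
rewrite (lsum_ext_sz _ (fun u _ => E0 u)) lsum_sum; apply: eq_bigr => t _.
have En : (t + (n - t.+1).+1)%N = n by rewrite subnSK ?ltn_ord // subnKC // ltnW.
by rewrite -(succ_aux p a K t (n - t.+1)) En.
Qed.
End P3.



Section P4.
Variable R : realType.
Variable p : nat -> R.
Variable a : seq nat -> R.
Variable K : nat.
Hypothesis Hp : forall l, 0 <= p l.
Hypothesis Ha01 : forall u, 0 <= a u <= 1.
Hypothesis Ha0 : forall u x, ~~ all (fun y => y <= x)%N u -> a (rcons u x) = 0.

Definition Pf t l := nsum K t (fun u => Wp p u * Qa a u * ind R (all (fun x => x <= l)%N u)).
Definition Sf t l := nsum K t (fun u => Wp p u * Qa a u * ind R (all (fun x => x <= l)%N u)
                                  * a (rcons u l)).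

Lemma Wp_ge0 u : 0 <= Wp p u.
Proof. by apply: prodr_ge0. Qed.

Lemma Qa01 u : 0 <= Qa a u <= 1.
Proof.
have H : forall s, 0 <= 1 - a (take s.+1 u) <= 1.
  move=> s; case/andP: (Ha01 (take s.+1 u)) => H0 H1.
  by rewrite subr_ge0 H1 /= lerBlDr lerDl.
by rewrite prodr_ge0 ?prodr_ile1 // => s _; case/andP: (H s).
Qed.

Lemma Qa_rcons u x : Qa a (rcons u x) = Qa a u * (1 - a (rcons u x)).
Proof.
rewrite /Qa size_rcons big_nat_recr //=; congr (_ * (1 - a _)).
  apply: eq_big_nat => s /andP[_ Hs].
  by rewrite -cats1 take_cat_le // ltnW.
by rewrite take_oversize // size_rcons.
Qed.

Lemma P0 l : Pf 0 l = 1.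
Proof. by rewrite /Pf /= /Wp /Qa big_nil big_geq // /ind /= !mulr1. Qed.

Lemma Pzero t : Pf t.+1 0 = 0.
Proof.
rewrite /Pf /=; apply: big1_seq => x; rewrite mem_index_iota => /andP[].
case: x => // x _ _.
rewrite -(@lsum0 R nat (index_iota 1 K.+1) t); apply: lsum_ext_sz => h _.
by rewrite /ind /= mulr0.
Qed.

Lemma SP t l : 0 <= Sf t l <= Pf t l.
Proof.
apply/andP; split.
  apply: lsum_ge0_sz => u _; case/andP: (Qa01 u) => ? _.
  case/andP: (ind01 R (all (fun x => x <= l)%N u)) => ? _.
  case/andP: (Ha01 (rcons u l)) => ? _.
  by rewrite !mulr_ge0 ?Wp_ge0.
apply: lsum_le_sz => u _; case/andP: (Qa01 u) => ? _.
case/andP: (ind01 R (all (fun x => x <= l)%N u)) => ? _.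
case/andP: (Ha01 (rcons u l)) => ? ?.
by rewrite ler_piMr // !mulr_ge0 ?Wp_ge0.
Qed.

Lemma all_pred_le (u : seq nat) l : all (fun x => x <= l.-1)%N u -> all (fun x => x <= l)%N u.
Proof. by apply: sub_all => x /leq_trans; apply; apply: leq_pred. Qed.

Lemma q_bounds t l : (1 <= l <= K)%N ->
  0 <= Pf t l - Pf t l.-1 <= cw p l ^+ t - cw p l.-1 ^+ t.
Proof.
move=> /andP[l1 lK].
have lK' : (l.-1 <= K)%N by rewrite (leq_trans (leq_pred l)).
rewrite -(nsum_all_le p t lK) -(nsum_all_le p t lK') /Pf -!lsumB.
have D : forall u, 0 <= ind R (all (fun x => x <= l)%N u) - ind R (all (fun x => x <= l.-1)%N u).
  move=> u; case: (boolP (all (fun x => x <= l.-1)%N u)) => H.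
    by rewrite (all_pred_le H) subrr.
  by rewrite /ind subr0 ler0n.
apply/andP; split.
  apply: lsum_ge0_sz => u _; rewrite -mulrBr mulr_ge0 //.
  by rewrite mulr_ge0 ?Wp_ge0 //; case/andP: (Qa01 u).
apply: lsum_le_sz => u _; rewrite -!mulrBr -mulrA ler_wpM2l ?Wp_ge0 //.
by rewrite ler_piMl ?D //; case/andP: (Qa01 u).
Qed.

Lemma cw_diff l : (1 <= l)%N -> cw p l - cw p l.-1 = p l.
Proof.
case: l => // l _; rewrite /cw big_nat_recr //=; ring.
Qed.

Lemma point_id u x l : (1 <= l)%N ->
  (1 - a (rcons u x)) * (ind R (x <= l)%N * ind R (all (fun y => y <= l)%N u)
     - ind R (x <= l.-1)%N * ind R (all (fun y => y <= l.-1)%N u))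
  = ind R (x <= l.-1)%N * (ind R (all (fun y => y <= l)%N u) - ind R (all (fun y => y <= l.-1)%N u))
    + (ind R (x <= l)%N - ind R (x <= l.-1)%N) *
      (ind R (all (fun y => y <= l)%N u) * (1 - a (rcons u l))).
Proof.
move=> l1.
case: (leqP x l.-1) => Hx1.
  have Hx : (x <= l)%N by rewrite (leq_trans Hx1) // leq_pred.
  rewrite Hx /ind /=.
  case: (boolP (all (fun y => y <= l.-1)%N u)) => H0.
    by rewrite (all_pred_le H0) /=; ring.
  case: (boolP (all (fun y => y <= l)%N u)) => H1 /=; last by ring.
  rewrite Ha0; first by ring.
  apply: contra H0; apply: sub_all => y /leq_trans; apply; exact: Hx1.
case: (leqP x l) => Hx.
  have -> : x = l by lia.
  by rewrite /ind /=; ring.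
by rewrite /ind /=; ring.
Qed.

Lemma P_rec t l : (1 <= l <= K)%N ->
  Pf t.+1 l - Pf t.+1 l.-1 = cw p l.-1 * (Pf t l - Pf t l.-1) + p l * Pf t l - p l * Sf t l.
Proof.
move=> /andP[l1 lK].
have lK' : (l.-1 <= K)%N by rewrite (leq_trans (leq_pred l)).
rewrite /Pf /Sf.
have -> : t.+1 = (t + 1)%N by rewrite addn1.
rewrite !lsum_cat /= -lsumB.
rewrite -!lsumZ -lsumB -lsumZ -lsumD -lsumB.
apply: lsum_ext_sz => u _.
rewrite -sumrB.
set W := Wp p u * Qa a u.
set A1 := ind R (all (fun y => y <= l)%N u).
set A0 := ind R (all (fun y => y <= l.-1)%N u).
set al := a (rcons u l).
rewrite (eq_bigr (fun x => W * (A1 - A0) * (p x * ind R (x <= l.-1)%N)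
     + W * (A1 * (1 - al)) * (p x * ind R (x <= l)%N)
     - W * (A1 * (1 - al)) * (p x * ind R (x <= l.-1)%N))); last first.
  move=> x _; rewrite !cats1 /Wp big_rcons /= -/(Wp p u) Qa_rcons !all_rcons !ind_and.
  have := point_id u x l1; rewrite -/A1 -/A0 -/al /W => E.
  transitivity (Wp p u * p x * Qa a u * ((1 - a (rcons u x)) *
    (ind R (x <= l)%N * A1 - ind R (x <= l.-1)%N * A0))); first by ring.
  rewrite E; ring.
rewrite sumrB big_split /= -!mulr_sumr !cw_split //.
rewrite -(cw_diff l1) /W /A1 /A0 /al; ring.
Qed.

End P4.



Section P5.
Variable R : realType.

Lemma succ_formula n (B : algorithm R) (Ft F : fdist R) K
  (pF : nat -> R) (a : seq nat -> R) :
  is_fdist F -> (forall x, mass F x != 0 -> exists2 l : nat, (1 <= l <= K)%N & x = l%:R) ->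
  (forall l, pF l = mass F l%:R) -> (forall u, a u = B Ft (map (fun m : nat => m%:R) u)) ->
  success n B Ft F = \sum_(1 <= t < n.+1) \sum_(1 <= l < K.+1)
     cw pF l ^+ (n - t) * (pF l * Sf pF a K t.-1 l).
Proof.
move=> [uS _ _ Hout _] Hsupp Hpf Ha.
rewrite success_lsum /succG.
pose U := map (fun m : nat => m%:R : R) (index_iota 1 K.+1).
have uU : uniq U.
  rewrite map_inj_uniq ?iota_uniq // => x y /eqP; rewrite eqr_nat => /eqP.
  by [].
have Hw : forall x, mass F x != 0 -> (x \in supp F) && (x \in U).
  move=> x Hx; apply/andP; split.
    by apply: contraR Hx => /Hout ->.
  have [l Hl ->] := Hsupp x Hx.
  by apply: map_f; rewrite mem_index_iota.
rewrite (lsum_supp _ _ uS uU Hw) lsum_map /Sf -succ_decomp.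
apply: lsum_ext_sz => u Hu.
have -> : Wp (mass F) [seq (m%:R : R) | m <- u] = Wp pF u.
  by rewrite /Wp big_map; apply: eq_bigr => x _; rewrite Hpf.
congr (_ * _); apply: eq_bigr => t _; congr (_ * _ * _).
- by apply: eq_bigr => s _; rewrite Ha map_take.
- by rewrite Ha map_take.
have -> : [forall j : 'I_n, nth 0 [seq (m%:R : R) | m <- u] j <= nth 0 [seq (m%:R : R) | m <- u] t]
   = all (fun x => x <= nth 0 u t)%N u.
  have Ht : (t < size u)%N by rewrite Hu.
  apply/idP/idP.
    move/forallP => H; apply/(all_nthP 0) => i Hi.
    have Hi' : (i < n)%N by rewrite -Hu.
    by have := H (Ordinal Hi'); rewrite /= !(nth_map 0%N) // ler_nat.
  move/(all_nthP 0) => H; apply/forallP => j.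
  have Hj : (j < size u)%N by rewrite Hu.
  by rewrite !(nth_map 0%N) // ler_nat; apply: H.
by case: (all _ _).
Qed.

Lemma Wp_scale (q q2 : nat -> R) (c : R) k u :
  (forall m, (m <= k)%N -> q2 m = q m / c) -> all (fun x => x <= k)%N u ->
  Wp q2 u = Wp q u / c ^+ size u.
Proof.
move=> Hq; elim: u => [|x u IH] /=; first by rewrite /Wp !big_nil expr0 divr1.
move=> /andP[Hx Hu]; rewrite /Wp !big_cons -!/(Wp _ _) IH // Hq // exprS invfM; ring.
Qed.

End P5.


Unset Implicit Arguments.


Theorem mainTheorem3 (R : realType) (n : nat) (A : algorithm R)
  (alpha beta : R) :
  valid_alg A -> consistent n A alpha -> robust n A beta ->
  forall (K : nat) (Ft : fdist R),
    is_fdist Ft ->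
    (forall x, mass Ft x != 0 -> exists2 l : nat, (1 <= l <= K)%N & x = l%:R) ->
    0 < pmf Ft 1 ->
    exists y : nat -> nat -> R,
      (forall l, (1 <= l <= K)%N -> y 0%N l = 1) /\
          (forall t l, (1 <= t <= n)%N -> (1 <= l <= K)%N -> 0 <= y t l <= 1) /\
          (forall t l, (1 <= t <= n)%N -> (1 <= l <= K)%N ->
             0 <= Delta Ft t l * y t l - Delta Ft t.-1 l * cdf Ft l.-1 * y t.-1 l) /\
          (forall t l, (1 <= t <= n)%N -> (1 <= l <= K)%N ->
             Delta Ft t l * y t l - Delta Ft t.-1 l * cdf Ft l.-1 * y t.-1 l
             <= \sum_(1 <= m < l.+1) Delta Ft t.-1 m * pmf Ft l * y t.-1 m) /\
          alpha <= \sum_(1 <= t < n.+1) \sum_(1 <= l < K.+1)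
                     cdf Ft l ^+ (n - t) * gain Ft y t l /\
          (forall k, (1 <= k <= K)%N ->
             beta <= \sum_(1 <= t < n.+1) \sum_(1 <= l < k.+1)
                       cdf Ft l ^+ (n - t) / cdf Ft k ^+ n * gain Ft y t l).
Proof.
move=> HA Hc Hr K Ft HFt Hsupp Hp1.
pose B := Bmod A.
pose a := fun u : seq nat => B Ft (map (fun m : nat => m%:R : R) u).
pose p := pmf Ft.
have HB : valid_alg B by apply: Bmod_valid.
have Ha01 : forall u, 0 <= a u <= 1 by move=> u; exact: HB.
have Ha0 : forall u x, ~~ all (fun y => y <= x)%N u -> a (rcons u x) = 0.
  move=> u x H; rewrite /a /B /Bmod map_rcons last_rcons all_rcons lexx /=.
  case: ifP => // /allP Hall; case/negP: H; apply/allP => y Hy.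
  by have := Hall _ (map_f _ Hy); rewrite ler_nat.
have Hp : forall l, 0 <= p l by case: HFt => ? ? Hm ? ?; move=> l; apply: Hm.
pose P := Pf p a K.
pose S := Sf p a K.
pose qq s m := if s == 0%N then (m == 1%N)%:R else P s m - P s m.-1.
pose y t l := if t == 0%N then 1 else if Delta Ft t l == 0 then 1
              else (P t l - P t l.-1) / Delta Ft t l.
have DY : forall s m, (1 <= m <= K)%N ->
    Delta Ft s m * y s m = qq s m /\ (s != 0%N -> 0 <= y s m <= 1).
  move=> s m Hm; case: s => [|s]; first by rewrite /Delta /y /qq /= mulr1.
  have [h0 h1] : 0 <= P s.+1 m - P s.+1 m.-1 /\
       P s.+1 m - P s.+1 m.-1 <= Delta Ft s.+1 m.
    by have /andP[? ?] := @q_bounds R p a K Hp Ha01 s.+1 m Hm.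
  rewrite /y /qq /=; case: eqP => HD.
    rewrite HD mul0r lexx ler01; split => //.
    by apply/eqP; rewrite eq_le h0 /= -HD.
  have HD' : 0 < Delta Ft s.+1 m by rewrite lt_def (introN eqP HD) (le_trans h0 h1).
  split; first by rewrite mulrC divfK //; apply/eqP.
  by rewrite divr_ge0 ?ler_pdivrMr ?mul1r // ltW.
have sumq : forall s l, (1 <= l)%N -> \sum_(1 <= m < l.+1) qq s m = P s l.
  move=> s l l1; case: s => [|s].
    rewrite big_ltn // /qq /= big_nat_cond big1 ?addr0; first by rewrite /P P0.
    by move=> i /andP[/andP[Hi _] _]; case: i Hi => // -[].
  have T : forall l, \sum_(1 <= m < l.+1) (P s.+1 m - P s.+1 m.-1) = P s.+1 l - P s.+1 0.
    elim=> [|l' IH]; first by rewrite big_geq // subrr.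
    by rewrite big_nat_recr //= IH; ring.
  by rewrite /qq /= T /P Pzero subr0.
have cdf0 : cdf Ft 0 = 0 by rewrite /cdf big_geq.
have cq : forall s l, (1 <= l)%N -> cdf Ft l.-1 * qq s l = cdf Ft l.-1 * (P s l - P s l.-1).
  move=> s l l1; case: s => [|s] //.
  rewrite /qq /=; case: l l1 => // -[|l] _ /=; first by rewrite cdf0 !mul0r.
  by rewrite /P !P0 subrr.
have rec : forall s l, (1 <= l <= K)%N ->
    qq s.+1 l - cdf Ft l.-1 * qq s l = p l * (P s l - S s l).
  move=> s l Hl; case/andP: (Hl) => l1 _.
  rewrite cq // {1}/qq /= /P (@P_rec R p a K Ha0 s l Hl) -/P -/S.
  rewrite (_ : cw p l.-1 = cdf Ft l.-1) //; ring.
have sumE : forall s l, (1 <= l <= K)%N ->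
    \sum_(1 <= m < l.+1) Delta Ft s m * pmf Ft l * y s m = p l * P s l.
  move=> s l /andP[l1 lK].
  rewrite -sumq // mulr_sumr; apply: eq_big_nat => m /andP[m1 ml].
  have Hm : (1 <= m <= K)%N by rewrite m1 (leq_trans _ lK) // -ltnS.
  by rewrite -(DY s m Hm).1 /p; ring.
have gainE : forall t l, (1 <= t <= n)%N -> (1 <= l <= K)%N ->
    gain Ft y t l = p l * S t.-1 l.
  move=> t l /andP[t1 _] Hl; case/andP: (Hl) => l1 lK.
  case: t t1 => // s _ /=.
  rewrite /gain /=.
  rewrite sumE //.
  have -> : Delta Ft s l * cdf Ft l.-1 * y s l = cdf Ft l.-1 * qq s l.
    by rewrite -(DY s l Hl).1; ring.
  rewrite (DY s.+1 l Hl).1.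
  have := rec s l Hl; lra.
have expr_eq : forall t l, (1 <= t)%N -> (1 <= l <= K)%N ->
    Delta Ft t l * y t l - Delta Ft t.-1 l * cdf Ft l.-1 * y t.-1 l = p l * (P t.-1 l - S t.-1 l).
  move=> t l t1 Hl; case: t t1 => // s _ /=.
  rewrite (DY s.+1 l Hl).1 -rec //; congr (_ - _).
  by rewrite -(DY s l Hl).1; ring.
exists y; split; first by [].
split.
  by move=> t l /andP[t1 _] Hl; apply: (DY t l Hl).2; rewrite -lt0n.
split.
  move=> t l /andP[t1 _] Hl; rewrite expr_eq //.
  case/andP: (@SP R p a K Hp Ha01 t.-1 l) => _ H.
  by rewrite mulr_ge0 ?subr_ge0.
split.
  move=> t l /andP[t1 _] Hl; rewrite expr_eq // sumE //.
  case/andP: (@SP R p a K Hp Ha01 t.-1 l) => H _.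
  by rewrite ler_wpM2l // lerBlDr lerDl.
split.
  apply: (le_trans (Hc Ft HFt)); apply: (le_trans (success_mono n Ft HA HFt)).
  rewrite (@succ_formula R n B Ft Ft K p a HFt Hsupp) //.
  rewrite le_eqVlt; apply/orP; left; apply/eqP; apply: eq_big_nat => t Ht; apply: eq_big_nat => l Hl.
  by rewrite gainE.
move=> k /andP[k1 kK].
pose c := cdf Ft k.
have cpos : 0 < c.
  rewrite /c /cdf big_ltn //.
  have : 0 <= \sum_(2 <= m < k.+1) pmf Ft m by apply: sumr_ge0 => m _; exact: Hp.
  move: Hp1; lra.
have c0 : c != 0 by rewrite gt_eqF.
pose mk := fun x : R => if x <= k%:R then mass Ft x / c else 0.
pose Fk := FDist (supp Ft) mk.
pose U := map (fun m : nat => m%:R : R) (index_iota 1 K.+1).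
have uU : uniq U.
  rewrite map_inj_uniq ?iota_uniq // => x1 x2 /eqP; rewrite eqr_nat => /eqP.
  by [].
have HFk : is_fdist Fk.
  case: HFt => uS aS Hm Hout Hsum; split => //.
  - move=> x; rewrite /= /mk; case: ifP => // _; by rewrite divr_ge0 ?Hm // ltW.
  - move=> x Hx; rewrite /= /mk Hout // mul0r; by case: ifP.
  have Hw : forall x, mass Ft x != 0 -> (x \in supp Ft) && (x \in U).
    move=> x Hx; apply/andP; split.
      by apply: contraR Hx => /Hout ->.
    have [l Hl ->] := Hsupp x Hx.
    by apply: map_f; rewrite mem_index_iota.
  rewrite /= /mk (eq_bigr (fun x => mass Ft x * (ind R (x <= k%:R) / c))); last first.
    by move=> x _; rewrite /ind; case: ifP => _ /=; rewrite ?mul0r ?mulr0 ?mul1r.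
  rewrite (sum_supp _ uS uU Hw) big_map.
  rewrite (eq_bigr (fun l => (p l * ind R (l <= k)%N) / c)); last first.
    by move=> l _; rewrite ler_nat mulrA.
  by rewrite -mulr_suml cw_split // divff.
have HsuppK : forall x, mass Fk x != 0 -> exists2 l : nat, (1 <= l <= K)%N & x = l%:R.
  move=> x; rewrite /= /mk; case: ifP => _ H; last by rewrite eqxx in H.
  by apply: Hsupp; apply: contraNneq H => ->; rewrite mul0r.
pose pk := fun l : nat => if (l <= k)%N then p l / c else 0.
have Hpk : forall l, pk l = mass Fk l%:R by move=> l; rewrite /pk /= /mk ler_nat.
apply: (le_trans (Hr Fk Ft HFk HFt)); apply: (le_trans (success_mono n Ft HA HFk)).
rewrite (@succ_formula R n B Ft Fk K pk a HFk HsuppK Hpk) //.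
rewrite le_eqVlt; apply/orP; left; apply/eqP; apply: eq_big_nat => t /andP[t1 tn].
rewrite (big_cat_nat _ (n:=k.+1)) ?ltnS //=.
have -> : \sum_(k.+1 <= l < K.+1) cw pk l ^+ (n - t) * (pk l * Sf pk a K t.-1 l) = 0.
  rewrite big_nat_cond big1 // => l /andP[/andP[Hl _] _].
  by rewrite {2}/pk leqNgt Hl /= mul0r mulr0.
rewrite addr0; apply: eq_big_nat => l /andP[l1 lk].
have Hl : (1 <= l <= K)%N by rewrite l1 (leq_trans _ kK) // -ltnS.
rewrite gainE ?t1 ?tn //.
have E1 : cw pk l = cw p l / c.
  rewrite /cw mulr_suml; apply: eq_big_nat => m /andP[_ ml].
  by rewrite /pk (leq_trans _ (_ : l <= k)%N) // -ltnS.
have E2 : Sf pk a K t.-1 l = Sf p a K t.-1 l / c ^+ t.-1.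
  rewrite /Sf mulrC -lsumZ; apply: lsum_ext_sz => u Hu.
  case: (boolP (all (fun x => x <= l)%N u)) => H; last by rewrite /ind /= !(mulr0, mul0r).
  have Hk : all (fun x => x <= k)%N u.
    by apply: sub_all H => x /leq_trans; apply; rewrite -ltnS.
  rewrite (@Wp_scale R p pk c k u) // ?Hu //; last first.
    by move=> m Hm; rewrite /pk Hm.
  by rewrite !mulrA [c ^- _ * _]mulrC.
have E3 : pk l = p l / c by rewrite /pk -ltnS lk.
rewrite E1 E2 E3 (_ : cw p l = cdf Ft l) //.
have En : c ^+ n = c ^+ (n - t) * c * c ^+ t.-1.
  rewrite -exprSr -exprD; congr (_ ^+ _); lia.
rewrite -/c En expr_div_n /S.
have c1 : c ^+ (n - t) != 0 by rewrite expf_neq0.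
have c2 : c ^+ t.-1 != 0 by rewrite expf_neq0.
move: (cdf Ft l ^+ (n - t)) (p l) (Sf p a K t.-1 l) c1 c2 => X Y Z.
move: (c ^+ (n - t)) (c ^+ t.-1) => C1 C2 c1 c2.
clearbody c; field.
by rewrite c0 c1 c2.
Qed.
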